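(* Let $M$ be a model of $PA^-$ of cardinality $\aleph_1$ which is Diophantine correct (i.e. $M$ satisfies every universal LA-sentence true in $\mathbb{N}$), and let $D$ be a regular filter on $\omega$. Then $M$ can be embedded (as an LA-structure) into the reduced power $\mathbb{N}^{\omega}/D$.
   Context: LA is the first-order language with non-logical symbols $+,\cdot,0,1,\leq$; $\mathbb{N}$ is the standard LA-structure. $PA^-$ is the theory of nonnegative parts of discretely ordered rings, axiomatized by: associativity and commutativity of $+$ and $\cdot$; distributivity $x\cdot(y+z)=x\cdot y+x\cdot z$; $x+0=x$, $x\cdot 0=0$, $x\cdot 1=x$; $\leq$ is a reflexive linear order with $<$ transitive and $x<y\vee x=y\vee y<x$ (where $x<y$ abbreviates $x\le y\wedge x\ne y$); $x<y\to x+z<y+z$; $0<z\wedge x<y\to x\cdot z<y\cdot z$; $x<y\to\exists z(x+z=y)$; $0<1$ and $x>0\to x\geq 1$; $x\geq 0$. A filter $D$ on $\omega$ is regular if there is a family $\{A_n\}_{n\in\omega}\subseteq D$ such that every element of $\omega$ belongs to only finitely many $A_n$. The reduced power $\mathbb{N}^\omega/D$ has as elements the classes of functions $f:\omega\to\mathbb{N}$ modulo $f\sim g$ iff $\{n: f(n)=g(n)\}\in D$, with $+,\cdot$ defined pointwise, $0,1$ the classes of constant functions, and $[f]\le[g]$ iff $\{n:f(n)\le g(n)\}\in D$. An embedding is an injective map preserving $0,1,+,\cdot$ and $\leq$. *)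

(* Defs.v *)
From Stdlib Require Import Arith.

Record LAstruct := {
  carrier :> Type;
  la_add : carrier -> carrier -> carrier;
  la_mul : carrier -> carrier -> carrier;
  la_zero : carrier;
  la_one : carrier;
  la_le : carrier -> carrier -> Prop
}.

Definition la_lt (M : LAstruct) (x y : M) : Prop := la_le M x y /\ x <> y.

Definition Nstd : LAstruct :=
  {| carrier := nat; la_add := Nat.add; la_mul := Nat.mul;
     la_zero := 0; la_one := 1; la_le := Nat.le |}.

Record PAminus (M : LAstruct) : Prop := {
  pa_add_assoc : forall x y z : M, la_add M (la_add M x y) z = la_add M x (la_add M y z);
  pa_add_comm : forall x y : M, la_add M x y = la_add M y x;
  pa_mul_assoc : forall x y z : M, la_mul M (la_mul M x y) z = la_mul M x (la_mul M y z);
  pa_mul_comm : forall x y : M, la_mul M x y = la_mul M y x;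
  pa_distr : forall x y z : M, la_mul M x (la_add M y z) = la_add M (la_mul M x y) (la_mul M x z);
  pa_add_0 : forall x : M, la_add M x (la_zero M) = x;
  pa_mul_0 : forall x : M, la_mul M x (la_zero M) = la_zero M;
  pa_mul_1 : forall x : M, la_mul M x (la_one M) = x;
  pa_le_refl : forall x : M, la_le M x x;
  pa_lt_trans : forall x y z : M, la_lt M x y -> la_lt M y z -> la_lt M x z;
  pa_trichotomy : forall x y : M, la_lt M x y \/ x = y \/ la_lt M y x;
  pa_lt_add : forall x y z : M, la_lt M x y -> la_lt M (la_add M x z) (la_add M y z);
  pa_lt_mul : forall x y z : M, la_lt M (la_zero M) z -> la_lt M x y ->
                la_lt M (la_mul M x z) (la_mul M y z);
  pa_lt_sub : forall x y : M, la_lt M x y -> exists z, la_add M x z = y;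
  pa_0_lt_1 : la_lt M (la_zero M) (la_one M);
  pa_discrete : forall x : M, la_lt M (la_zero M) x -> la_le M (la_one M) x;
  pa_nonneg : forall x : M, la_le M (la_zero M) x
}.

Inductive term :=
| Tvar : nat -> term
| Tzero : term
| Tone : term
| Tadd : term -> term -> term
| Tmul : term -> term -> term.

Inductive qf_formula :=
| Feq : term -> term -> qf_formula
| Fle : term -> term -> qf_formula
| Fnot : qf_formula -> qf_formula
| Fand : qf_formula -> qf_formula -> qf_formula
| For : qf_formula -> qf_formula -> qf_formula.

Fixpoint eval_term (M : LAstruct) (e : nat -> M) (t : term) : M :=
  match t with
  | Tvar i => e i
  | Tzero => la_zero M
  | Tone => la_one M
  | Tadd a b => la_add M (eval_term M e a) (eval_term M e b)
  | Tmul a b => la_mul M (eval_term M e a) (eval_term M e b)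
  end.

Fixpoint sat_qf (M : LAstruct) (e : nat -> M) (phi : qf_formula) : Prop :=
  match phi with
  | Feq a b => eval_term M e a = eval_term M e b
  | Fle a b => la_le M (eval_term M e a) (eval_term M e b)
  | Fnot p => ~ sat_qf M e p
  | Fand p q => sat_qf M e p /\ sat_qf M e q
  | For p q => sat_qf M e p \/ sat_qf M e q
  end.

(** A universal LA-sentence is the universal closure of a quantifier-free
    formula; it holds in M iff the matrix holds under every assignment. *)
Definition sat_universal_closure (M : LAstruct) (phi : qf_formula) : Prop :=
  forall e : nat -> M, sat_qf M e phi.

Definition diophantine_correct (M : LAstruct) : Prop :=
  forall phi : qf_formula,
    sat_universal_closure Nstd phi -> sat_universal_closure M phi.

Definition countable_set {T : Type} (A : T -> Prop) : Prop :=
  exists h : T -> nat, forall x y, A x -> A y -> h x = h y -> x = y.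

(** T has cardinality aleph_1: T is uncountable and carries a strict
    well-order of type omega_1 (every proper initial segment countable). *)
Definition card_aleph1 (T : Type) : Prop :=
  ~ countable_set (fun _ : T => True) /\
  exists R : T -> T -> Prop,
    well_founded R /\
    (forall x y z, R x y -> R y z -> R x z) /\
    (forall x y, R x y \/ x = y \/ R y x) /\
    (forall x, countable_set (fun y => R y x)).

Definition filter_on_omega (D : (nat -> Prop) -> Prop) : Prop :=
  D (fun _ => True) /\
  ~ D (fun _ => False) /\
  (forall A B, D A -> D B -> D (fun n => A n /\ B n)) /\
  (forall A B : nat -> Prop, D A -> (forall n, A n -> B n) -> D B).

Definition regular_filter (D : (nat -> Prop) -> Prop) : Prop :=
  filter_on_omega D /\
  exists A : nat -> (nat -> Prop),
    (forall n, D (A n)) /\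
    (forall k, exists N, forall n, A n k -> n < N).

(** * Embeddings into the reduced power N^omega / D.
    An element of N^omega/D is the class [g] of some g : nat -> nat; a map
    M -> N^omega/D is given by choosing a representative f x of each image. *)
Definition D_eq (D : (nat -> Prop) -> Prop) (g h : nat -> nat) : Prop :=
  D (fun n => g n = h n).

Definition D_le (D : (nat -> Prop) -> Prop) (g h : nat -> nat) : Prop :=
  D (fun n => g n <= h n).

Definition embeds_into_reduced_power (D : (nat -> Prop) -> Prop)
    (M : LAstruct) (f : M -> nat -> nat) : Prop :=
  (forall x y : M, D_eq D (f x) (f y) -> x = y) /\
  D_eq D (f (la_zero M)) (fun _ => 0) /\
  D_eq D (f (la_one M)) (fun _ => 1) /\
  (forall x y : M, D_eq D (f (la_add M x y)) (fun n => f x n + f y n)) /\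
  (forall x y : M, D_eq D (f (la_mul M x y)) (fun n => f x n * f y n)) /\
  (forall x y : M, la_le M x y <-> D_le D (f x) (f y)).

(* Main.v *)
Require Import Defs.
From Stdlib Require Import Arith Lia Classical ClassicalEpsilon FunctionalExtensionality Cantor.

Fixpoint ren_t (s : nat -> nat) (t : term) : term :=
  match t with
  | Tvar i => Tvar (s i) | Tzero => Tzero | Tone => Tone
  | Tadd a b => Tadd (ren_t s a) (ren_t s b)
  | Tmul a b => Tmul (ren_t s a) (ren_t s b) end.
Fixpoint ren (s : nat -> nat) (p : qf_formula) : qf_formula :=
  match p with
  | Feq a b => Feq (ren_t s a) (ren_t s b) | Fle a b => Fle (ren_t s a) (ren_t s b)
  | Fnot q => Fnot (ren s q) | Fand q r => Fand (ren s q) (ren s r)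
  | For q r => For (ren s q) (ren s r) end.

Lemma eval_ren M e s t : eval_term M e (ren_t s t) = eval_term M (fun i => e (s i)) t.
Proof. induction t; simpl; congruence. Qed.
Lemma sat_ren M e s p : sat_qf M e (ren s p) <-> sat_qf M (fun i => e (s i)) p.
Proof. induction p; simpl; rewrite ?eval_ren; tauto. Qed.

Fixpoint bnd_t t := match t with Tvar i => S i | Tzero => 0 | Tone => 0
  | Tadd a b => max (bnd_t a) (bnd_t b) | Tmul a b => max (bnd_t a) (bnd_t b) end.
Fixpoint bnd p := match p with
  | Feq a b => max (bnd_t a) (bnd_t b) | Fle a b => max (bnd_t a) (bnd_t b)
  | Fnot q => bnd q | Fand q r => max (bnd q) (bnd r) | For q r => max (bnd q) (bnd r) end.

Lemma eval_ext M e e' t : (forall i, i < bnd_t t -> e i = e' i) ->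
  eval_term M e t = eval_term M e' t.
Proof.
  induction t; simpl; intros H; try reflexivity.
  - apply H; lia.
  - rewrite IHt1, IHt2; auto; intros; apply H; lia.
  - rewrite IHt1, IHt2; auto; intros; apply H; lia.
Qed.
Lemma sat_ext M e e' p : (forall i, i < bnd p -> e i = e' i) ->
  (sat_qf M e p <-> sat_qf M e' p).
Proof.
  induction p; simpl; intros H.
  - rewrite (eval_ext M e e' t), (eval_ext M e e' t0); try tauto; intros; apply H; lia.
  - rewrite (eval_ext M e e' t), (eval_ext M e e' t0); try tauto; intros; apply H; lia.
  - rewrite IHp; tauto.
  - rewrite IHp1, IHp2; try tauto; intros; apply H; lia.
  - rewrite IHp1, IHp2; try tauto; intros; apply H; lia.
Qed.
Lemma sat_ext_all M e e' p : (forall i, e i = e' i) -> (sat_qf M e p <-> sat_qf M e' p).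
Proof. intros H; apply sat_ext; auto. Qed.

Fixpoint code_t t := match t with
  | Tvar i => to_nat (0, i) | Tzero => to_nat (1, 0) | Tone => to_nat (2, 0)
  | Tadd a b => to_nat (3, to_nat (code_t a, code_t b))
  | Tmul a b => to_nat (4, to_nat (code_t a, code_t b)) end.
Fixpoint code p := match p with
  | Feq a b => to_nat (0, to_nat (code_t a, code_t b))
  | Fle a b => to_nat (1, to_nat (code_t a, code_t b))
  | Fnot q => to_nat (2, code q)
  | Fand q r => to_nat (3, to_nat (code q, code r))
  | For q r => to_nat (4, to_nat (code q, code r)) end.

Lemma to_nat_inj p q : to_nat p = to_nat q -> p = q.
Proof. intros H. rewrite <- (cancel_of_to p), <- (cancel_of_to q), H. reflexivity. Qed.

Lemma pair_inj2 a b c d : to_nat (a, b) = to_nat (c, d) -> a = c /\ b = d.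
Proof. intros H; apply to_nat_inj in H; injection H; auto. Qed.

Lemma code_t_inj t u : code_t t = code_t u -> t = u.
Proof.
  revert u; induction t; destruct u; cbn -[to_nat]; intros H;
    destruct (pair_inj2 _ _ _ _ H) as [H1 H2]; try discriminate H1; try reflexivity.
  - subst; reflexivity.
  - destruct (pair_inj2 _ _ _ _ H2); f_equal; auto.
  - destruct (pair_inj2 _ _ _ _ H2); f_equal; auto.
Qed.
Lemma code_inj p q : code p = code q -> p = q.
Proof.
  revert q; induction p; destruct q; cbn -[to_nat]; intros H;
    destruct (pair_inj2 _ _ _ _ H) as [H1 H2]; try discriminate H1.
  - destruct (pair_inj2 _ _ _ _ H2); f_equal; auto using code_t_inj.
  - destruct (pair_inj2 _ _ _ _ H2); f_equal; auto using code_t_inj.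
  - f_equal; auto.
  - destruct (pair_inj2 _ _ _ _ H2); f_equal; auto.
  - destruct (pair_inj2 _ _ _ _ H2); f_equal; auto.
Qed.

Definition Ftrue := Feq Tzero Tzero.
Definition form (n : nat) : qf_formula := epsilon (inhabits Ftrue) (fun p => code p = n).
Lemma form_code p : form (code p) = p.
Proof.
  unfold form. apply code_inj.
  apply (epsilon_spec (inhabits Ftrue) (fun q => code q = code p)). exists p; reflexivity.
Qed.

Lemma D_mono (D : (nat -> Prop) -> Prop) (A B : nat -> Prop) : filter_on_omega D ->
  D A -> (forall n, A n -> B n) -> D B.
Proof. intros (_&_&_&H) HA HAB; eapply H; eauto. Qed.
Lemma D_and (D : (nat -> Prop) -> Prop) (A B : nat -> Prop) : filter_on_omega D ->
  D A -> D B -> D (fun n => A n /\ B n).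
Proof. intros (_&_&H&_); auto. Qed.
Lemma D_true (D : (nat -> Prop) -> Prop) (A : nat -> Prop) : filter_on_omega D ->
  (forall n, A n) -> D A.
Proof. intros F H. destruct F as (HT&_&_&Hm). eapply Hm; [exact HT|]. auto. Qed.
Lemma D_false (D : (nat -> Prop) -> Prop) (A : nat -> Prop) : filter_on_omega D ->
  D A -> (forall n, ~ A n) -> False.
Proof. intros F HA H. pose proof F as (_&HF&_). apply HF. eapply D_mono; [exact F|exact HA|]. intros n An; exact (H n An). Qed.

Definition Good (M : LAstruct) (D : (nat -> Prop) -> Prop) (S : M -> Prop)
  (g : M -> nat -> nat) : Prop :=
  forall (phi : qf_formula) (e : nat -> M) (P : nat -> Prop),
    (forall i, P i -> S (e i)) -> sat_qf M e phi ->
    D (fun k => exists e' : nat -> nat,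
          (forall i, P i -> e' i = g (e i) k) /\ sat_qf Nstd e' phi).

Lemma Good_ext M D S g g' : filter_on_omega D ->
  (forall x, S x -> g x = g' x) -> Good M D S g -> Good M D S g'.
Proof.
  intros F Hx HG phi e P HP Hs. eapply D_mono; [exact F| apply (HG phi e P HP Hs)|].
  intros k (e'&H1&H2). exists e'; split; auto. intros i Pi. rewrite <- Hx; auto.
Qed.

Lemma Good_mono (M : LAstruct) D (S S' : M -> Prop) g :
  (forall x, S' x -> S x) -> Good M D S g -> Good M D S' g.
Proof. intros H HG phi e P HP Hs. apply HG; auto. Qed.

Lemma Good_empty M D g : filter_on_omega D -> diophantine_correct M ->
  Good M D (fun _ => False) g.
Proof.
  intros F Hd phi e P HP Hs. apply D_true; auto. intros k.
  destruct (classic (exists e' : nat -> nat, sat_qf Nstd e' phi)) as [[e' He']|Hn].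
  - exists e'; split; auto. intros i Pi; destruct (HP i Pi).
  - exfalso. assert (Hu : sat_universal_closure Nstd (Fnot phi)).
    { intros e'; simpl; intros Hs'; apply Hn; exists e'; exact Hs'. }
    apply (Hd _ Hu e); exact Hs.
Qed.

Lemma Good_bounded M D S g : filter_on_omega D ->
  (forall phi e (P : nat -> Prop), (forall i, P i -> S (e i)) -> (forall i, P i -> i < bnd phi) ->
     sat_qf M e phi ->
     D (fun k => exists e' : nat -> nat,
          (forall i, P i -> e' i = g (e i) k) /\ sat_qf Nstd e' phi)) ->
  Good M D S g.
Proof.
  intros F H phi e P HP Hs.
  specialize (H phi e (fun i => P i /\ i < bnd phi)).
  eapply D_mono; [exact F| apply H; [intros i [Pi _]; auto| intros i [_ Hi]; auto| exact Hs]|].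
  intros k (e'&H1&H2).
  exists (fun i => if lt_dec i (bnd phi) then e' i else g (e i) k). split.
  - intros i Pi. destruct (lt_dec i (bnd phi)); auto.
  - eapply sat_ext; [|exact H2]. intros i Hi. destruct (lt_dec i (bnd phi)); [reflexivity|lia].
Qed.

Lemma Good_union (M : LAstruct) D (R : M -> M -> Prop) (T : M -> Prop) g : filter_on_omega D ->
  diophantine_correct M ->
  (forall x y z, R x y -> R y z -> R x z) -> (forall x y, R x y \/ x = y \/ R y x) ->
  (forall c, T c -> Good M D (fun x => R x c \/ x = c) g) -> Good M D T g.
Proof.
  intros F Hd Htr Htri HG. apply Good_bounded; auto.
  intros phi e P HP Hb Hs.
  assert (Hm : forall m, (forall i, i < m -> ~ P i) \/
     exists c, T c /\ forall i, i < m -> P i -> R (e i) c \/ e i = c).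
  { induction m as [|m IH].
    - left; intros; lia.
    - destruct (classic (P m)) as [Pm|nPm].
      + right. destruct IH as [IH|(c&Tc&Hc)].
        * exists (e m); split; auto. intros i Hi Pi.
          assert (i = m) by (destruct (Nat.eq_dec i m); auto; exfalso; apply (IH i); auto; lia).
          subst; auto.
        * destruct (Htri (e m) c) as [H1|[H1|H1]].
          -- exists c; split; auto. intros i Hi Pi.
             destruct (Nat.eq_dec i m); [subst; auto|apply Hc; auto; lia].
          -- exists c; split; auto. intros i Hi Pi.
             destruct (Nat.eq_dec i m); [subst; auto|apply Hc; auto; lia].
          -- exists (e m); split; auto. intros i Hi Pi.
             destruct (Nat.eq_dec i m); [subst; auto|].
             destruct (Hc i) as [H2|H2]; try lia; auto; [left; eauto|left; subst; auto].
      + destruct IH as [IH|(c&Tc&Hc)].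
        * left. intros i Hi Pi. destruct (Nat.eq_dec i m); [subst; auto|apply (IH i); auto; lia].
        * right. exists c; split; auto. intros i Hi Pi.
          destruct (Nat.eq_dec i m); [subst; tauto|apply Hc; auto; lia]. }
  destruct (Hm (bnd phi)) as [H0|(c&Tc&Hc)].
  - apply (Good_empty M D g F Hd phi e P); [intros i Pi; exfalso; apply (H0 i); auto|exact Hs].
  - apply (HG c Tc phi e P); [intros i Pi; apply Hc; auto|exact Hs].
Qed.

Definition CEg {T : Type} (ip : nat -> Prop) (y : T) (pv : nat -> T) (w : nat -> T) (n : nat) : T :=
  if Nat.eq_dec n 0 then y else
  if excluded_middle_informative (ip n) then pv (Nat.div2 (n - 2)) else w n.
Lemma CEg_0 {T} ip (y : T) pv w : CEg ip y pv w 0 = y.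
Proof. reflexivity. Qed.
Lemma CEg_P {T} ip (y : T) pv w n : n <> 0 -> ip n -> CEg ip y pv w n = pv (Nat.div2 (n - 2)).
Proof. intros H1 H2; unfold CEg; destruct (Nat.eq_dec n 0); [contradiction|].
  destruct (excluded_middle_informative (ip n)); [reflexivity|contradiction]. Qed.
Lemma CEg_W {T} ip (y : T) pv w n : n <> 0 -> ~ ip n -> CEg ip y pv w n = w n.
Proof. intros H1 H2; unfold CEg; destruct (Nat.eq_dec n 0); [contradiction|].
  destruct (excluded_middle_informative (ip n)); [contradiction|reflexivity]. Qed.

Fixpoint bigc (it : nat -> qf_formula) (m : nat) : qf_formula :=
  match m with 0 => it 0 | S m' => Fand (bigc it m') (it (S m')) end.
Lemma sat_bigc X e it m : sat_qf X e (bigc it m) <-> forall r, r <= m -> sat_qf X e (it r).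
Proof.
  induction m; simpl.
  - split; [intros H r Hr; assert (r = 0) by lia; subst; auto| intros H; apply H; lia].
  - rewrite IHm. split.
    + intros [H1 H2] r Hr. destruct (Nat.eq_dec r (S m)); [subst; auto|apply H1; lia].
    + intros H; split; [intros r Hr; apply H; lia| apply H; lia].
Qed.

Lemma nat_max (Pr : nat -> Prop) N : (forall j, Pr j -> j < N) -> (exists j, Pr j) ->
  exists jm, Pr jm /\ forall j, Pr j -> j <= jm.
Proof.
  revert Pr; induction N; intros Pr Hb Hex.
  - destruct Hex as [j Hj]; specialize (Hb j Hj); lia.
  - destruct (classic (Pr N)) as [HN|HN].
    + exists N; split; auto. intros j Hj; specialize (Hb j Hj); lia.
    + apply IHN; auto. intros j Hj. specialize (Hb j Hj).
      destruct (Nat.eq_dec j N); [subst; contradiction|lia].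
Qed.

Lemma div2_2 i : Nat.div2 (2 * i + 2 - 2) = i.
Proof. replace (2 * i + 2 - 2) with (2 * i) by lia. apply Nat.div2_double. Qed.
Lemma div2_1 i : Nat.div2 (2 * i + 1 - 1) = i.
Proof. replace (2 * i + 1 - 1) with (2 * i) by lia. apply Nat.div2_double. Qed.
Lemma divmod_pair j r n : r <= j -> (n * S j + r) / S j = n /\ (n * S j + r) mod S j = r.
Proof.
  intros H. split.
  - rewrite Nat.div_add_l by lia. rewrite Nat.div_small by lia. lia.
  - rewrite Nat.add_comm, Nat.Div0.mod_add. apply Nat.mod_small; lia.
Qed.

Lemma step (M : LAstruct) D (R : M -> M -> Prop) (a : M) (c : M -> nat)
  (g : M -> nat -> nat) (A : nat -> nat -> Prop) :
  filter_on_omega D -> (forall n, D (A n)) -> (forall k, exists N, forall n, A n k -> n < N) ->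
  (forall x y, R x a -> R y a -> c x = c y -> x = y) ->
  Good M D (fun x => R x a) g ->
  exists h, Good M D (fun x => R x a \/ x = a)
    (fun x => if excluded_middle_informative (x = a) then h else g x).
Proof.
  intros F HA HAf Hc HG.
  pose (valid i := exists b, R b a /\ c b = i).
  pose (pool i := epsilon (inhabits a) (fun b => R b a /\ c b = i)).
  assert (Hpool : forall i, valid i -> R (pool i) a /\ c (pool i) = i).
  { intros i Hv. apply (epsilon_spec (inhabits a) (fun b => R b a /\ c b = i)); exact Hv. }
  assert (Hpool2 : forall b, R b a -> pool (c b) = b).
  { intros b Hb. destruct (Hpool (c b)) as [H1 H2]; [exists b; auto|]. apply Hc; auto. }
  pose (isP n := exists i, n = 2 * i + 2 /\ valid i).
  assert (isP_pidx : forall n, isP n -> n <> 0 /\ valid (Nat.div2 (n - 2))).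
  { intros n (i&->&Hv). rewrite div2_2. split; [lia|exact Hv]. }
  assert (isP_odd : forall m, ~ isP (2 * m + 1)).
  { intros m (i&Hi&_). lia. }
  pose (tr r := exists w : nat -> M, sat_qf M (CEg isP a pool w) (form r)).
  pose (wr r := epsilon (inhabits (fun _ : nat => a))
                  (fun w => sat_qf M (CEg isP a pool w) (form r))).
  pose (Ws j r n := 2 * (n * S j + r) + 1).
  pose (sg j r n := if Nat.eq_dec n 0 then 0 else
                    if excluded_middle_informative (isP n) then n else Ws j r n).
  pose (item j r := if excluded_middle_informative (tr r) then ren (sg j r) (form r) else Ftrue).
  pose (Phi j := bigc (item j) j).
  pose (E j n := if Nat.eq_dec n 0 then a else
                 if excluded_middle_informative (isP n) then pool (Nat.div2 (n - 2)) else
                 wr ((Nat.div2 (n - 1)) mod S j) (Nat.div2 (n - 1) / S j)).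
  assert (HE : forall j r n, r <= j -> E j (sg j r n) = CEg isP a pool (wr r) n).
  { intros j r n Hr. unfold sg, E, CEg.
    destruct (Nat.eq_dec n 0) as [->|Hn0]; [reflexivity|].
    destruct (excluded_middle_informative (isP n)) as [Hp|Hp].
    - destruct (Nat.eq_dec n 0); [contradiction|].
      destruct (excluded_middle_informative (isP n)); [reflexivity|contradiction].
    - unfold Ws. destruct (Nat.eq_dec (2 * (n * S j + r) + 1) 0); [lia|].
      destruct (excluded_middle_informative (isP (2 * (n * S j + r) + 1))) as [Hq|Hq].
      + exfalso; exact (isP_odd _ Hq).
      + rewrite div2_1. destruct (divmod_pair j r n Hr) as [-> ->]. reflexivity. }
  assert (HME : forall j, sat_qf M (E j) (Phi j)).
  { intros j. apply sat_bigc. intros r Hr. unfold item.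
    destruct (excluded_middle_informative (tr r)) as [Ht|Ht]; [|simpl; reflexivity].
    apply sat_ren.
    refine (proj2 (sat_ext_all _ _ _ _ _) _); [intros n; apply HE; exact Hr|].
    apply (epsilon_spec (inhabits (fun _ : nat => a))
                  (fun w => sat_qf M (CEg isP a pool w) (form r))). exact Ht. }
  pose (B j k := exists e' : nat -> nat,
          (forall i, isP i -> e' i = g (E j i) k) /\ sat_qf Nstd e' (Phi j)).
  assert (HB : forall j, D (B j)).
  { intros j. apply (HG (Phi j) (E j) isP); [|apply HME].
    intros i Hi. destruct (isP_pidx i Hi) as [Hi0 Hv]. unfold E.
    destruct (Nat.eq_dec i 0); [contradiction|].
    destruct (excluded_middle_informative (isP i)); [|contradiction]. apply Hpool; exact Hv. }
  pose (Qr r k (y : nat) := tr r -> exists w' : nat -> nat,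
          sat_qf Nstd (CEg isP y (fun i => g (pool i) k) w') (form r)).
  assert (HBQ : forall j k, B j k -> exists y, forall r, r <= j -> Qr r k y).
  { intros j k (e'&H1&H2). exists (e' 0). intros r Hr Ht. exists (fun n => e' (sg j r n)).
    unfold Phi in H2. rewrite sat_bigc in H2. specialize (H2 r Hr). unfold item in H2.
    destruct (excluded_middle_informative (tr r)) as [_|]; [|contradiction].
    rewrite sat_ren in H2.
    refine (proj1 (sat_ext_all _ _ _ _ _) H2). intros n.
    destruct (Nat.eq_dec n 0) as [->|Hn0]; [reflexivity|].
    destruct (classic (isP n)) as [Hp|Hp].
    - rewrite CEg_P by auto. unfold sg.
      destruct (Nat.eq_dec n 0); [contradiction|].
      destruct (excluded_middle_informative (isP n)); [|contradiction].
      rewrite H1 by auto. unfold E.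
      destruct (Nat.eq_dec n 0); [contradiction|].
      destruct (excluded_middle_informative (isP n)); [reflexivity|contradiction].
    - rewrite CEg_W by auto. reflexivity. }
  pose (lev k r := forall i, i <= r -> B i k /\ A i k).
  assert (Hlev : forall r, D (fun k => lev k r)).
  { induction r.
    - eapply D_mono; [exact F| apply (D_and D _ _ F (HB 0) (HA 0))|].
      intros k [H1 H2] i Hi. assert (i = 0) by lia; subst; auto.
    - eapply D_mono; [exact F| apply (D_and D _ _ F IHr (D_and D _ _ F (HB (S r)) (HA (S r))))|].
      intros k [H1 [H2 H3]] i Hi. destruct (Nat.eq_dec i (S r)); [subst; auto|apply H1; lia]. }
  pose (h k := epsilon (inhabits 0) (fun y => forall r, lev k r -> Qr r k y)).
  assert (Hh : forall k r, lev k r -> Qr r k (h k)).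
  { intros k r Hl. apply (epsilon_spec (inhabits 0) (fun y => forall r, lev k r -> Qr r k y));
      [|exact Hl].
    destruct (HAf k) as [N HN].
    destruct (nat_max (lev k) N) as (jm&Hjm&Hmax).
    { intros j Hj. apply HN. apply (Hj j); lia. }
    { exists r; exact Hl. }
    destruct (HBQ jm k (proj1 (Hjm jm (le_n _)))) as [y Hy].
    exists y. intros r' Hr'. apply Hy. apply Hmax; exact Hr'. }
  exists h.
  intros phi e P HP Hs.
  pose (sp i := if excluded_middle_informative (P i) then
                  (if excluded_middle_informative (e i = a) then 0 else 2 * c (e i) + 2)
                else 2 * i + 1).
  pose (ps := ren sp phi). pose (r := code ps).
  assert (Htr : tr r).
  { exists (fun m => e (Nat.div2 (m - 1))). unfold r; rewrite form_code. unfold ps; apply sat_ren.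
    refine (proj2 (sat_ext_all _ _ _ _ _) Hs). intros i. unfold sp.
    destruct (excluded_middle_informative (P i)) as [Pi|nPi].
    - destruct (excluded_middle_informative (e i = a)) as [Ea|Na].
      + rewrite CEg_0; auto.
      + assert (Hr : R (e i) a) by (destruct (HP i Pi); [auto|contradiction]).
        rewrite CEg_P; [|lia|exists (c (e i)); split; [reflexivity| exists (e i); auto]].
        rewrite div2_2. apply Hpool2; exact Hr.
    - rewrite CEg_W; [|lia|apply isP_odd]. rewrite div2_1. reflexivity. }
  eapply D_mono; [exact F| apply (Hlev r)|].
  intros k Hl. destruct (Hh k r Hl Htr) as [w' Hw'].
  unfold r in Hw'; rewrite form_code in Hw'. unfold ps in Hw'. rewrite sat_ren in Hw'.
  eexists; split; [|exact Hw'].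
  intros i Pi. simpl. unfold sp.
  destruct (excluded_middle_informative (P i)) as [_|]; [|contradiction].
  destruct (excluded_middle_informative (e i = a)) as [Ea|Na].
  - rewrite CEg_0. reflexivity.
  - assert (Hr : R (e i) a) by (destruct (HP i Pi); [auto|contradiction]).
    rewrite CEg_P; [|lia|exists (c (e i)); split; [reflexivity| exists (e i); auto]].
    rewrite div2_2. rewrite Hpool2 by exact Hr. reflexivity.
Qed.


Lemma useG (M : LAstruct) D f : filter_on_omega D -> Good M D (fun _ => True) f ->
  forall phi e, sat_qf M e phi ->
  D (fun k => exists e' : nat -> nat, (forall i, e' i = f (e i) k) /\ sat_qf Nstd e' phi).
Proof.
  intros F HG phi e Hs. eapply D_mono; [exact F|apply (HG phi e (fun _ => True) (fun _ _ => I) Hs)|].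
  intros k (e'&H1&H2). exists e'; split; auto.
Qed.

Theorem theorem3 :
  forall (M : LAstruct),
    PAminus M -> card_aleph1 M -> diophantine_correct M ->
    forall D : (nat -> Prop) -> Prop, regular_filter D ->
    exists f : M -> nat -> nat, embeds_into_reduced_power D M f.
Proof.
  intros M _ Hcard Hd D HD.
  destruct Hcard as [_ (R & Hwf & Htr & Htri & Hcnt)].
  destruct HD as [F (A & HA & HAf)].
  pose (restr := fun (al : M) (G : forall b, R b al -> nat -> nat) (x : M) => match excluded_middle_informative (R x al) with
             | left p => G x p | right _ => fun _ : nat => 0 end).
  pose (stepF := fun (al : M) (G : forall b, R b al -> nat -> nat) =>
    epsilon (inhabits (fun _ : nat => 0))
      (fun h => Good M D (fun x => R x al \/ x = al)
         (fun x => if excluded_middle_informative (x = al) then h else restr al G x))).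
  pose (Fm := Fix Hwf (fun _ => nat -> nat) stepF).
  assert (Heq : forall al, Fm al = stepF al (fun b _ => Fm b)).
  { intros al. unfold Fm. apply (Fix_eq Hwf (fun _ => nat -> nat) stepF). intros x f1 f2 Hf. unfold stepF. f_equal.
    apply functional_extensionality; intros h. f_equal.
    apply functional_extensionality; intros y.
    destruct (excluded_middle_informative (y = x)); auto. unfold restr.
    destruct (excluded_middle_informative (R y x)); auto. }
  assert (HGood : forall al, Good M D (fun x => R x al \/ x = al) Fm).
  { intro al. induction al as [al IH] using (well_founded_ind Hwf).
    assert (H1 : Good M D (fun x => R x al) Fm) by (apply (Good_union M D R); auto).
    destruct (Hcnt al) as [c Hc].
    assert (H2 : Good M D (fun x => R x al) (restr al (fun b _ => Fm b))).
    { apply (Good_ext M D _ Fm); auto. intros x Hx; unfold restr.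
      destruct (excluded_middle_informative (R x al)); [reflexivity|contradiction]. }
    destruct (step M D R al c _ A F HA HAf Hc H2) as [h Hh].
    pose proof (epsilon_spec (inhabits (fun _ : nat => 0))
      (fun h => Good M D (fun x => R x al \/ x = al)
         (fun x => if excluded_middle_informative (x = al) then h
                   else restr al (fun b _ => Fm b) x)) (ex_intro _ h Hh)) as H3.
    apply (Good_ext M D _ _ Fm F) in H3; auto.
    intros x Hx. destruct (excluded_middle_informative (x = al)) as [->|Hn].
    - rewrite Heq. reflexivity.
    - unfold restr. destruct (excluded_middle_informative (R x al)); [reflexivity|].
      destruct Hx; contradiction. }
  assert (HAll : Good M D (fun _ => True) Fm) by (apply (Good_union M D R); auto).
  pose proof (useG M D Fm F HAll) as U.
  exists Fm. unfold embeds_into_reduced_power, D_eq, D_le.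
  split; [|split; [|split; [|split; [|split]]]].
  - intros x y Hxy. destruct (classic (x = y)) as [|Hn]; auto. exfalso.
    pose proof (U (Fnot (Feq (Tvar 0) (Tvar 1))) (fun i => match i with 0 => x | _ => y end)
                  Hn) as H.
    apply (D_false D _ F (D_and D _ _ F H Hxy)).
    intros k [(e'&H1&H2) H3]. apply H2. simpl. rewrite (H1 0), (H1 1). exact H3.
  - pose proof (U (Feq (Tvar 0) Tzero) (fun _ => la_zero M) eq_refl) as H.
    eapply D_mono; [exact F|exact H|]. intros k (e'&H1&H2). simpl in H2.
    rewrite <- (H1 0). exact H2.
  - pose proof (U (Feq (Tvar 0) Tone) (fun _ => la_one M) eq_refl) as H.
    eapply D_mono; [exact F|exact H|]. intros k (e'&H1&H2). simpl in H2.
    rewrite <- (H1 0). exact H2.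
  - intros x y.
    pose proof (U (Feq (Tvar 0) (Tadd (Tvar 1) (Tvar 2)))
      (fun i => match i with 0 => la_add M x y | 1 => x | _ => y end) eq_refl) as H.
    eapply D_mono; [exact F|exact H|]. intros k (e'&H1&H2). simpl in H2.
    rewrite <- (H1 0), <- (H1 1), <- (H1 2). exact H2.
  - intros x y.
    pose proof (U (Feq (Tvar 0) (Tmul (Tvar 1) (Tvar 2)))
      (fun i => match i with 0 => la_mul M x y | 1 => x | _ => y end) eq_refl) as H.
    eapply D_mono; [exact F|exact H|]. intros k (e'&H1&H2). simpl in H2.
    rewrite <- (H1 0), <- (H1 1), <- (H1 2). exact H2.
  - intros x y. split.
    + intros Hle.
      pose proof (U (Fle (Tvar 0) (Tvar 1)) (fun i => match i with 0 => x | _ => y end) Hle) as H.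
      eapply D_mono; [exact F|exact H|]. intros k (e'&H1&H2). simpl in H2.
      rewrite <- (H1 0), <- (H1 1). exact H2.
    + intros Hle. destruct (classic (la_le M x y)) as [|Hn]; auto. exfalso.
      pose proof (U (Fnot (Fle (Tvar 0) (Tvar 1))) (fun i => match i with 0 => x | _ => y end)
                  Hn) as H.
      apply (D_false D _ F (D_and D _ _ F H Hle)).
      intros k [(e'&H1&H2) H3]. apply H2. simpl. rewrite (H1 0), (H1 1). exact H3.
Qed.
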